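(* Let $G_1$ and $G_2$ be the local OPERA DAGs held by two honest nodes. Then $G_1$ and $G_2$ are consistent, i.e. for every event $v$ contained in both $G_1$ and $G_2$ we have $G_1[v] = G_2[v]$.
   Context: An OPERA DAG is a finite directed acyclic graph $G=(V,E)$ whose vertices are event blocks (events). Each event contains a list of references to its parent events, given by their cryptographic hashes. The edge $(v_i,v_j)\in E$ means that $v_i$ references $v_j$ as a parent. Cryptographic hashes are assumed secure, so the hash references of an event determine its parents uniquely. An honest node adds a received or created event $v$ to its local OPERA DAG only if it already has all the parents referenced by $v$, and it then adds the edges from $v$ to those parents. For a vertex $v$ of $G$, $G[v]=(V_v,E_v)$ denotes the subgraph of $G$ induced on $V_v$, the set consisting of $v$ and all its ancestors (the vertices reachable from $v$ by following edges). Two OPERA DAGs $G_1,G_2$ are consistent, written $G_1\sim G_2$, if $G_1[v]=G_2[v]$ for every event $v$ contained in both. *)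

(* Defs.v *)
From Stdlib Require Import List Relations.
Import ListNotations.
Set Implicit Arguments.

(* Events are abstract; their content is global: every event e carries
   [parents e], the list of hashes of its parent events.  [hash] is the
   cryptographic hash function. *)

(* An OPERA DAG: finite vertex list and edge relation ((x,y) means x references y). *)
Record opera_dag (Event : Type) := mkDag {
  dverts : list Event;
  dedges : Event -> Event -> Prop
}.

Inductive honest_dag {Event Hash : Type} (hash : Event -> Hash)
    (parents : Event -> list Hash) : opera_dag Event -> Prop :=
| hd_empty : honest_dag hash parents (mkDag (@nil Event) (fun _ _ => False))
| hd_add (G : opera_dag Event) (v : Event) :
    honest_dag hash parents G ->
    ~ In v (dverts G) ->
    (forall h, In h (parents v) -> exists u, In u (dverts G) /\ hash u = h) ->
    honest_dag hash parents
      (mkDag (v :: dverts G)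
             (fun x y => dedges G x y \/
                         (x = v /\ In y (dverts G) /\ In (hash y) (parents v)))).

Definition anc_set {Event} (G : opera_dag Event) (v : Event) : Event -> Prop :=
  fun u => In u (dverts G) /\ clos_refl_trans Event (dedges G) v u.

(* G[v] : the subgraph of G induced on V_v, as (vertex set, edge set). *)
Definition sub_at {Event} (G : opera_dag Event) (v : Event)
  : (Event -> Prop) * (Event -> Event -> Prop) :=
  (anc_set G v, fun x y => anc_set G v x /\ anc_set G v y /\ dedges G x y).

Definition consistent {Event} (G1 G2 : opera_dag Event) : Prop :=
  forall v, In v (dverts G1) -> In v (dverts G2) -> sub_at G1 v = sub_at G2 v.

(* Main.v *)
Require Import Defs.
From Stdlib Require Import List Relations.
From Stdlib Require Import FunctionalExtensionality PropExtensionality.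

Section S.
Variables (Event Hash : Type) (hash : Event -> Hash) (parents : Event -> list Hash)
  (hash_secure : forall e1 e2 : Event, hash e1 = hash e2 -> e1 = e2).

Definition R x y := In (hash y) (parents x).

Lemma inv G : honest_dag hash parents G ->
  (forall x y, dedges G x y <-> In x (dverts G) /\ In y (dverts G) /\ R x y) /\
  (forall x y, In x (dverts G) -> R x y -> In y (dverts G)).
Proof.
  induction 1 as [|G v H IH Hn Hp]; simpl.
  - split; [tauto | tauto].
  - destruct IH as [IE IC]. split.
    + intros x y. rewrite IE. unfold R. split.
      * intros [[? [? ?]]|[-> [? ?]]]; tauto.
      * intros [[<-|Hx] [[<-|Hy] Hr]].
        -- destruct (Hp _ Hr) as [u [Hu Hh]]. apply hash_secure in Hh. subst. contradiction.
        -- right; tauto.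
        -- exfalso. apply Hn. eapply IC; eauto.
        -- left; tauto.
    + intros x y [<-|Hx] Hr.
      * destruct (Hp _ Hr) as [u [Hu Hh]]. apply hash_secure in Hh. subst. tauto.
      * right. eauto.
Qed.

Lemma anc_eq G v : honest_dag hash parents G -> In v (dverts G) ->
  forall u, anc_set G v u <-> clos_refl_trans Event R v u.
Proof.
  intros HG Hv u. destruct (@inv G HG) as [IE IC]. unfold anc_set. split.
  - intros [_ H]. clear Hv. induction H.
    + apply rt_step. apply IE in H. tauto.
    + apply rt_refl.
    + eapply rt_trans; eauto.
  - intros H. apply clos_rt_rt1n in H. induction H.
    + split; [assumption | apply rt_refl].
    + assert (Hy : In y (dverts G)) by eauto.
      destruct (IHclos_refl_trans_1n Hy) as [Hz Hr]. split; [exact Hz|].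
      eapply rt_trans; [apply rt_step|exact Hr]. apply IE. tauto.
Qed.

Lemma sub_eq G v : honest_dag hash parents G -> In v (dverts G) ->
  sub_at G v = (fun u => clos_refl_trans Event R v u,
                fun x y => clos_refl_trans Event R v x /\ clos_refl_trans Event R v y /\ R x y).
Proof.
  intros HG Hv. unfold sub_at. f_equal.
  - apply functional_extensionality; intro u. apply propositional_extensionality.
    apply (@anc_eq G v HG Hv).
  - apply functional_extensionality; intro x. apply functional_extensionality; intro y.
    apply propositional_extensionality. rewrite !(@anc_eq G v HG Hv).
    destruct (@inv G HG) as [IE _]. rewrite IE.
    split; [tauto|]. intros [Ax [Ay Rxy]]. repeat split; auto.
    + apply (proj2 (@anc_eq G v HG Hv x)) in Ax. exact (proj1 Ax).
    + apply (proj2 (@anc_eq G v HG Hv y)) in Ay. exact (proj1 Ay).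
Qed.
End S.

Theorem mainTheorem1 (Event Hash : Type) (hash : Event -> Hash)
    (parents : Event -> list Hash)
    (hash_secure : forall e1 e2 : Event, hash e1 = hash e2 -> e1 = e2)
    (G1 G2 : opera_dag Event) :
  honest_dag hash parents G1 -> honest_dag hash parents G2 ->
  consistent G1 G2.
Proof.
  intros H1 H2 v I1 I2.
  rewrite (@sub_eq Event Hash hash parents hash_secure G1 v H1 I1), (@sub_eq Event Hash hash parents hash_secure G2 v H2 I2). reflexivity.
Qed.
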